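(* For any natural number $n \geq 1$, $\{\omega \cdot (n+1), \omega^\star \cdot (n+1)\} \leq_c \{\omega^2 \cdot n, (\omega^2)^\star \cdot n\}$.
   Context: Structures have domains contained in $\omega$. For countable structures $\mathcal{A},\mathcal{B}$, the class $\{\mathcal{A},\mathcal{B}\}$ denotes the class of all structures (with domain $\subseteq\omega$) isomorphic to $\mathcal{A}$ or to $\mathcal{B}$. Linear orders are in the language $\{<\}$; $L^\star$ is the reverse of a linear order $L$; $\omega\cdot (n+1)$, $\omega^2\cdot n$ are ordinal order types. An enumeration operator $\Gamma$ is a c.e. set of pairs $(\alpha,\varphi)$ with $\alpha$ a finite set of basic (atomic or negated atomic) sentences of the input language with constants from $\omega$ and $\varphi$ a basic sentence of the output language with constants from $\omega$; $\Gamma(X)=\{\varphi : (\alpha,\varphi)\in\Gamma,\ \alpha\subseteq X\}$. $\Gamma$ is a computable embedding of $\mathcal{K}_0$ into $\mathcal{K}_1$ ($\mathcal{K}_0\leq_c\mathcal{K}_1$) if for every $\mathcal{A}\in\mathcal{K}_0$, $\Gamma$ applied to the atomic diagram of $\mathcal{A}$ is the atomic diagram of a structure $\Gamma(\mathcal{A})\in\mathcal{K}_1$, and for all $\mathcal{A},\mathcal{B}\in\mathcal{K}_0$, $\mathcal{A}\cong\mathcal{B}$ iff $\Gamma(\mathcal{A})\cong\Gamma(\mathcal{B})$. *)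

(* Defs.v *)
From HB Require Import structures.
From mathcomp Require Import all_boot.
Set Implicit Arguments. Unset Strict Implicit. Unset Printing Implicit Defensive.

Definition cpair (a b : nat) : nat := (a + b) * (a + b).+1 %/ 2 + b.
Definition unpair_step (p : nat * nat) : nat * nat :=
  if p.1 is a.+1 then (a, p.2.+1) else (p.2.+1, 0).
Definition unpair (n : nat) : nat * nat := iter n unpair_step (0, 0).

Inductive prcode : Type :=
| PZero
| PSucc
| PId
| PFst
| PSnd
| PPair of prcode & prcode
| PComp of prcode & prcode
| PRec of prcode & prcode     (* h<x,0> = f x ; h<x,k+1> = g <x,<k,h<x,k>>> *)
| PMu of prcode.              (* x |-> least y with f<x,y> = 0, all earlier defined *)

Inductive peval : prcode -> nat -> nat -> Prop :=
| ev_zero x : peval PZero x 0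
| ev_succ x : peval PSucc x x.+1
| ev_id x : peval PId x x
| ev_fst x : peval PFst x (unpair x).1
| ev_snd x : peval PSnd x (unpair x).2
| ev_pair f g x a b : peval f x a -> peval g x b -> peval (PPair f g) x (cpair a b)
| ev_comp f g x y z : peval g x y -> peval f y z -> peval (PComp f g) x z
| ev_rec0 f g x y : peval f x y -> peval (PRec f g) (cpair x 0) y
| ev_recS f g x k y z : peval (PRec f g) (cpair x k) y ->
    peval g (cpair x (cpair k y)) z -> peval (PRec f g) (cpair x k.+1) z
| ev_mu f x y :
    peval f (cpair x y) 0 ->
    (forall z, z < y -> exists v, v <> 0 /\ peval f (cpair x z) v) ->
    peval (PMu f) x y.

Definition ce_set (S : nat -> Prop) : Prop :=
  exists c : prcode, forall x, S x <-> exists y, peval c x y.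

Definition ce_pred (T : countType) (P : T -> Prop) : Prop :=
  ce_set (fun n => exists x : T, pickle x = n /\ P x).

Record lstruct := LStruct { sdom : nat -> Prop ; slt : nat -> nat -> Prop }.

Inductive atom := AEq of nat & nat | ALt of nat & nat.
Inductive bsent := BPos of atom | BNeg of atom.

Definition bsent_enc (s : bsent) : bool * (bool * (nat * nat)) :=
  match s with
  | BPos (AEq a b) => (true, (true, (a, b)))
  | BPos (ALt a b) => (true, (false, (a, b)))
  | BNeg (AEq a b) => (false, (true, (a, b)))
  | BNeg (ALt a b) => (false, (false, (a, b)))
  end.
Definition bsent_dec (p : bool * (bool * (nat * nat))) : bsent :=
  match p with
  | (true, (true, (a, b))) => BPos (AEq a b)
  | (true, (false, (a, b))) => BPos (ALt a b)
  | (false, (true, (a, b))) => BNeg (AEq a b)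
  | (false, (false, (a, b))) => BNeg (ALt a b)
  end.
Lemma bsent_encK : cancel bsent_enc bsent_dec.
Proof. by case=> [[]|[]]. Qed.
HB.instance Definition _ := Countable.copy bsent (can_type bsent_encK).

Definition atom_consts (a : atom) : nat * nat :=
  match a with AEq x y => (x, y) | ALt x y => (x, y) end.
Definition atom_holds (A : lstruct) (a : atom) : Prop :=
  match a with AEq x y => x = y | ALt x y => slt A x y end.

Definition diag (A : lstruct) (s : bsent) : Prop :=
  match s with
  | BPos a => [/\ sdom A (atom_consts a).1, sdom A (atom_consts a).2 & atom_holds A a]
  | BNeg a => [/\ sdom A (atom_consts a).1, sdom A (atom_consts a).2 & ~ atom_holds A a]
  end.

Definition enum_op := seq bsent * bsent -> Prop.
Definition is_enum_op (G : enum_op) : Prop := ce_pred G.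
Definition apply_op (G : enum_op) (X : bsent -> Prop) (phi : bsent) : Prop :=
  exists alpha : seq bsent, G (alpha, phi) /\ (forall s, s \in alpha -> X s).

Definition iso (A B : lstruct) : Prop :=
  exists f : nat -> nat,
    [/\ forall x, sdom A x -> sdom B (f x),
        forall x y, sdom A x -> sdom A y -> f x = f y -> x = y,
        forall y, sdom B y -> exists2 x, sdom A x & f x = y
      & forall x y, sdom A x -> sdom A y -> (slt A x y <-> slt B (f x) (f y))].

Definition iso_to (A : lstruct) (T : Type) (R : T -> T -> Prop) : Prop :=
  exists f : nat -> T,
    [/\ forall x y, sdom A x -> sdom A y -> f x = f y -> x = y,
        forall t : T, exists2 x, sdom A x & f x = t
      & forall x y, sdom A x -> sdom A y -> (slt A x y <-> R (f x) (f y))].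

Record order_type := OrderType { ot_car : Type ; ot_lt : ot_car -> ot_car -> Prop }.

Definition cls2 (L1 L2 : order_type) (A : lstruct) : Prop :=
  iso_to A (@ot_lt L1) \/ iso_to A (@ot_lt L2).

(* Computable embedding K0 <=_c K1. Gamma(A) is the structure whose atomic
   diagram is Gamma applied to the atomic diagram of A. *)
Definition comp_embeds (K0 K1 : lstruct -> Prop) : Prop :=
  exists G : enum_op,
    [/\ is_enum_op G,
        forall A, K0 A -> exists B, K1 B /\ (forall phi, apply_op G (diag A) phi <-> diag B phi)
      & forall A A' B B', K0 A -> K0 A' ->
          (forall phi, apply_op G (diag A) phi <-> diag B phi) ->
          (forall phi, apply_op G (diag A') phi <-> diag B' phi) ->
          (iso A A' <-> iso B B')].

Definition lex (T U : Type) (RT : T -> T -> Prop) (RU : U -> U -> Prop)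
  (p q : T * U) : Prop := RT p.1 q.1 \/ (p.1 = q.1 /\ RU p.2 q.2).

Definition ord_lt (k : nat) (i j : 'I_k) : Prop := (i < j)%N.
Definition nat_lt (a b : nat) : Prop := (a < b)%N.

Definition omega2_lt : nat * nat -> nat * nat -> Prop := lex nat_lt nat_lt.

(* L * m  (m copies of L in sequence) realized on 'I_m * L. *)
Definition rev_ot (L : order_type) : order_type :=
  OrderType (fun x y : ot_car L => ot_lt y x).

Definition omega_times (m : nat) : order_type :=
  OrderType (lex (@ord_lt m) nat_lt).
Definition omegastar_times (m : nat) : order_type :=
  OrderType (lex (@ord_lt m) (fun a b : nat => nat_lt b a)).
Definition omega2_times (m : nat) : order_type :=
  OrderType (lex (@ord_lt m) omega2_lt).
Definition omega2star_times (m : nat) : order_type :=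
  OrderType (lex (@ord_lt m) (fun p q : nat * nat => omega2_lt q p)).

(* Main.v *)
Require Import Defs.
From mathcomp Require Import all_boot.
From Stdlib Require Import Lia ClassicalEpsilon Classical.
From mathcomp Require Import zify.
Set Implicit Arguments. Unset Strict Implicit. Unset Printing Implicit Defensive.

Definition tri s := s * s.+1 %/ 2.
Lemma triS s : tri s.+1 = tri s + s.+1.
Proof.
rewrite /tri. have -> : s.+1 * s.+2 = s.+1 * 2 + s * s.+1 by nia.
by rewrite divnMDl // addnC.
Qed.

Lemma cpairE a b : cpair a b = tri (a + b) + b.
Proof. by []. Qed.

Lemma tri_mono s t : s < t -> tri s + s < tri t.
Proof.
elim: t => // t IH; rewrite ltnS leq_eqVlt => /orP [/eqP-> | /IH h].
  by rewrite triS; lia.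
rewrite triS; lia.
Qed.

Lemma cpair_inj a b c d : cpair a b = cpair c d -> a = c /\ b = d.
Proof.
rewrite !cpairE => E.
have Hs : a + b = c + d.
  case: (ltngtP (a + b) (c + d)) => // h.
  - have := tri_mono h; lia.
  - have := tri_mono h; lia.
rewrite Hs in E; lia.
Qed.

Lemma cpair_step p : cpair (unpair_step p).1 (unpair_step p).2 = (cpair p.1 p.2).+1.
Proof.
case: p => [[|a] b] /=; rewrite !cpairE.
  rewrite !addn0 !add0n triS; lia.
have -> : a.+1 + b = a + b.+1 by lia.
lia.
Qed.

Lemma cpair_unpair n : cpair (unpair n).1 (unpair n).2 = n.
Proof.
elim: n => // n IH. rewrite /unpair iterS -/(unpair n) cpair_step IH //.
Qed.

Lemma unpair_cpair a b : unpair (cpair a b) = (a, b).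
Proof.
have := cpair_unpair (cpair a b); case: (unpair _) => x y /= /cpair_inj [-> ->] //.
Qed.

Lemma unpair1 a b : (unpair (cpair a b)).1 = a. Proof. by rewrite unpair_cpair. Qed.
Lemma unpair2 a b : (unpair (cpair a b)).2 = b. Proof. by rewrite unpair_cpair. Qed.

Lemma tri_ge s : s < tri s.+1.
Proof. rewrite triS; lia. Qed.
Lemma cpair_geL a b : a <= cpair a b.
Proof.
rewrite cpairE. case: a => // a. have := tri_ge (a + b). rewrite addSn. lia.
Qed.
Lemma cpair_geR a b : b <= cpair a b.
Proof. rewrite cpairE. lia. Qed.
Lemma tri_le s t : s <= t -> tri s <= tri t.
Proof.
rewrite leq_eqVlt => /orP [/eqP -> //|h]. have := tri_mono h; lia.
Qed.
Lemma cpair_mono a b c d : a <= c -> b <= d -> cpair a b <= cpair c d.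
Proof.
move=> h1 h2; rewrite !cpairE. have : tri (a + b) <= tri (c + d) by apply: tri_le; lia.
lia.
Qed.


Lemma inv_comp f g x z : peval (PComp f g) x z -> exists y, peval g x y /\ peval f y z.
Proof. move=> H; inversion H; subst; eauto. Qed.
Lemma inv_succ x z : peval PSucc x z -> z = x.+1.
Proof. move=> H; inversion H; subst; eauto. Qed.
Lemma inv_fst x z : peval PFst x z -> z = (unpair x).1.
Proof. move=> H; inversion H; subst; eauto. Qed.
Lemma inv_snd x z : peval PSnd x z -> z = (unpair x).2.
Proof. move=> H; inversion H; subst; eauto. Qed.
Lemma inv_pair f g x z : peval (PPair f g) x z -> exists a b, [/\ peval f x a, peval g x b & z = cpair a b].
Proof. move=> H; inversion H; subst. by exists a, b. Qed.
Lemma inv_mu f x y : peval (PMu f) x y -> peval f (cpair x y) 0.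
Proof. move=> H; inversion H; subst; eauto. Qed.

Definition mucomp (f : nat -> nat) := exists c, forall x y, peval c x y <-> y = f x.

Lemma comp_ext f g : (forall x, f x = g x) -> mucomp f -> mucomp g.
Proof. move=> E [c Hc]; exists c => x y; rewrite -E; exact: Hc. Qed.

Lemma comp_id : mucomp (fun x => x).
Proof. exists PId => x y; split => [H|->]; [by inversion H | constructor]. Qed.

Lemma comp_zero : mucomp (fun _ => 0).
Proof. exists PZero => x y; split => [H|->]; [by inversion H | constructor]. Qed.

Lemma comp_succ f : mucomp f -> mucomp (fun x => (f x).+1).
Proof.
move=> [c Hc]; exists (PComp PSucc c) => x y; split => [H|->].
  case/inv_comp: H => y0 [/Hc -> /inv_succ ->] //.
by apply: (@ev_comp _ _ _ (f x)); [apply/Hc | constructor].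
Qed.

Lemma comp_const k : mucomp (fun _ => k).
Proof. elim: k => [|k IH]; [exact: comp_zero | exact: comp_succ IH]. Qed.

Lemma comp_fst f : mucomp f -> mucomp (fun x => (unpair (f x)).1).
Proof.
move=> [c Hc]; exists (PComp PFst c) => x y; split => [H|->].
  case/inv_comp: H => y0 [/Hc -> /inv_fst ->] //.
by apply: (@ev_comp _ _ _ (f x)); [apply/Hc | constructor].
Qed.

Lemma comp_snd f : mucomp f -> mucomp (fun x => (unpair (f x)).2).
Proof.
move=> [c Hc]; exists (PComp PSnd c) => x y; split => [H|->].
  case/inv_comp: H => y0 [/Hc -> /inv_snd ->] //.
by apply: (@ev_comp _ _ _ (f x)); [apply/Hc | constructor].
Qed.

Lemma comp_pair f g : mucomp f -> mucomp g -> mucomp (fun x => cpair (f x) (g x)).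
Proof.
move=> [c Hc] [d Hd]; exists (PPair c d) => x y; split => [H|->].
  by case/inv_pair: H => a [b [/Hc -> /Hd -> ->]].
by constructor; [apply/Hc | apply/Hd].
Qed.

Lemma comp_compose f g : mucomp f -> mucomp g -> mucomp (fun x => f (g x)).
Proof.
move=> [c Hc] [d Hd]; exists (PComp c d) => x y; split => [H|->].
  by case/inv_comp: H => y0 [/Hd -> /Hc].
by apply: (@ev_comp _ _ _ (g x)); [apply/Hd | apply/Hc].
Qed.

Section Rec.
Variables (f0 g : nat -> nat).
Fixpoint hrec x k := if k is k'.+1 then g (cpair x (cpair k' (hrec x k'))) else f0 x.

Lemma comp_rec : mucomp f0 -> mucomp g -> mucomp (fun p => hrec (unpair p).1 (unpair p).2).
Proof.
move=> [c Hc] [d Hd]; exists (PRec c d).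
have key : forall x k y, peval (PRec c d) (cpair x k) y <-> y = hrec x k.
  move=> x k y; split.
    move=> H; remember (PRec c d) as cc eqn:Ec; remember (cpair x k) as z eqn:Ez.
    elim: H x k Ec Ez => //.
    - move=> f g0 x0 y0 H0 _ x k [Ef Eg] /cpair_inj [<- <-] /=. subst. by move/Hc: H0.
    - move=> f g0 x0 k0 y0 z0 H0 IH H1 _ x k [Ef Eg] /cpair_inj [<- <-] /=.
      subst. have E := IH x0 k0 erefl erefl. subst y0. by move/Hd: H1.
  move=> ->; elim: k => [|k IH] /=.
    by constructor; apply/Hc.
  by apply: ev_recS IH _; apply/Hd.
move=> p y. rewrite -{1}(cpair_unpair p). exact: key.
Qed.
End Rec.

Definition comp2 (h : nat -> nat -> nat) := mucomp (fun p => h (unpair p).1 (unpair p).2).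

Lemma comp_bin h f g : comp2 h -> mucomp f -> mucomp g -> mucomp (fun x => h (f x) (g x)).
Proof.
move=> Hh Hf Hg. apply: comp_ext (comp_compose Hh (comp_pair Hf Hg)) => x /=.
by rewrite unpair_cpair.
Qed.

Lemma comp_v1 : mucomp (fun v => (unpair v).1). Proof. exact: comp_fst comp_id. Qed.
Lemma comp_v2 : mucomp (fun v => (unpair v).2). Proof. exact: comp_snd comp_id. Qed.
(* for g inputs: v = cpair x (cpair k y) *)
Lemma comp_gx : mucomp (fun v => (unpair v).1). Proof. exact: comp_v1. Qed.
Lemma comp_gk : mucomp (fun v => (unpair (unpair v).2).1). Proof. exact: comp_fst comp_v2. Qed.
Lemma comp_gy : mucomp (fun v => (unpair (unpair v).2).2). Proof. exact: comp_snd comp_v2. Qed.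

Lemma comp2_add : comp2 addn.
Proof.
apply: comp_ext (comp_rec (f0 := fun x => x) (g := fun v => (unpair (unpair v).2).2.+1) comp_id (comp_succ comp_gy)).
move=> p /=; elim: (unpair p).2 => [|k IH] /=; first by rewrite addn0.
by rewrite !unpair_cpair /= IH addnS.
Qed.

Lemma comp_add f g : mucomp f -> mucomp g -> mucomp (fun x => f x + g x).
Proof. exact: comp_bin comp2_add. Qed.

Lemma comp2_mul : comp2 muln.
Proof.
apply: comp_ext (comp_rec (f0 := fun x => 0) (g := fun v => (unpair (unpair v).2).2 + (unpair v).1) comp_zero (comp_add comp_gy comp_gx)).
move=> p /=; elim: (unpair p).2 => [|k IH] /=; first by rewrite muln0.
by rewrite !unpair_cpair /= IH mulnS addnC.
Qed.

Lemma comp_mul f g : mucomp f -> mucomp g -> mucomp (fun x => f x * g x).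
Proof. exact: comp_bin comp2_mul. Qed.

Lemma comp_pred f : mucomp f -> mucomp (fun x => (f x).-1).
Proof.
move=> Hf.
have H : mucomp (fun p => hrec (fun _ => 0) (fun v => (unpair (unpair v).2).1) (unpair p).1 (unpair p).2).
  exact: comp_rec comp_zero comp_gk.
have H2 := comp_compose H (comp_pair comp_zero Hf).
apply: comp_ext H2 => x /=. rewrite !unpair_cpair /=. case: (f x) => //= k.
by rewrite !unpair_cpair.
Qed.

Lemma comp2_sub : comp2 subn.
Proof.
apply: comp_ext (comp_rec (f0 := fun x => x) (g := fun v => (unpair (unpair v).2).2.-1) comp_id (comp_pred comp_gy)).
move=> p /=; elim: (unpair p).2 => [|k IH] /=; first by rewrite subn0.
by rewrite !unpair_cpair /= IH subnS.
Qed.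

Lemma comp_sub f g : mucomp f -> mucomp g -> mucomp (fun x => f x - g x).
Proof. exact: comp_bin comp2_sub. Qed.

Lemma comp_pow2 f : mucomp f -> mucomp (fun x => 2 ^ f x).
Proof.
move=> Hf.
have H : mucomp (fun p => hrec (fun _ => 1) (fun v => (unpair (unpair v).2).2 + (unpair (unpair v).2).2) (unpair p).1 (unpair p).2).
  exact: comp_rec (comp_const 1) (comp_add comp_gy comp_gy).
have H2 := comp_compose H (comp_pair comp_zero Hf).
apply: comp_ext H2 => x /=. rewrite !unpair_cpair /=. elim: (f x) => //= k IH.
by rewrite !unpair_cpair /= IH expnS mul2n addnn.
Qed.

Lemma comp_ifz z a b : mucomp z -> mucomp a -> mucomp b ->
  mucomp (fun x => if z x == 0 then a x else b x).
Proof.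
move=> Hz Ha Hb.
have H := comp_add (comp_mul Ha (comp_sub (comp_const 1) Hz))
                   (comp_mul Hb (comp_sub (comp_const 1) (comp_sub (comp_const 1) Hz))).
apply: comp_ext H => x /=. case: (z x) => [|k] /=; first by rewrite subn0 muln1 subnn muln0 addn0.
have -> : 1 - k.+1 = 0 by lia.
by rewrite muln0 add0n subn0 muln1.
Qed.

Lemma comp_ifeq a b c d : mucomp a -> mucomp b -> mucomp c -> mucomp d ->
  mucomp (fun x => if a x == b x then c x else d x).
Proof.
move=> Ha Hb Hc Hd.
have H := comp_ifz (comp_add (comp_sub Ha Hb) (comp_sub Hb Ha)) Hc Hd.
apply: comp_ext H => x /=.
case: (eqVneq (a x) (b x)) => [->|ne]; first by rewrite subnn.
have -> : (a x - b x + (b x - a x) == 0) = false by apply/eqP; lia.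
done.
Qed.

Lemma comp_iflt a b c d : mucomp a -> mucomp b -> mucomp c -> mucomp d ->
  mucomp (fun x => if a x < b x then c x else d x).
Proof.
move=> Ha Hb Hc Hd.
have H := comp_ifz (comp_sub (comp_succ Ha) Hb) Hc Hd.
apply: comp_ext H => x /=.
by rewrite subn_eq0.
Qed.

Lemma ce_of_comp P : mucomp P -> ce_set (fun n => exists t, P (cpair n t) = 0).
Proof.
move=> [c Hc]; exists (PMu c) => n; split.
  move=> ex. have ex' : exists t, (P (cpair n t) == 0) by case: ex => t /eqP; exists t.
  pose t := ex_minn ex'. exists t.
  rewrite /t; case: ex_minnP => m /eqP Hm Hmin.
  constructor; first by apply/Hc.
  move=> z lt; exists (P (cpair n z)); split; last by apply/Hc.
  move=> E; have := Hmin z; rewrite E eqxx => /(_ erefl); lia.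
move=> [y /inv_mu H]. exists y. by move/Hc: H.
Qed.

Definition cs (a m : nat) : nat := 2 ^ a * (2 * m + 1).
Definition enc2 u v := cs u (cs v 0).
Definition ebs a b := enc2 1 (enc2 0 (enc2 a b)).

Lemma code_cons a s : CodeSeq.code (a :: s) = cs a (CodeSeq.code s).
Proof. by rewrite /= /cs -mul2n addn1. Qed.

Definition ifeq (a b c d : nat) : nat := if a == b then c else d.
Definition iflt (a b c d : nat) : nat := if a < b then c else d.
Definition pq_p (k x y x' y' : nat) : nat :=
  ifeq k 1 x (ifeq k 2 y (ifeq k 3 x' (ifeq k 4 y' y))).
Definition pq_q (k x y x' y' : nat) : nat :=
  ifeq k 1 x' (ifeq k 2 y' (ifeq k 3 x (ifeq k 4 y x))).
Definition sg (k : nat) : nat := iflt k 3 1 0.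
Definition eqk (k : nat) : nat := ifeq k 0 1 (ifeq k 6 1 0).
Definition okk (k x y x' y' : nat) : nat :=
  ifeq k 0 (ifeq x x' (ifeq y y' 0 1) 1)
  (ifeq k 2 (ifeq x x' 0 1)
  (ifeq k 4 (ifeq x x' 0 1)
  (ifeq k 5 (ifeq x x' (ifeq y y' 0 1) 1)
  (ifeq k 6 (ifeq (cpair x y) (cpair x' y') 1 0)
  (iflt k 7 0 1))))).

Definition mkalpha k x y w x' y' w' : seq bsent :=
  [:: BPos (ALt y x); BPos (ALt x w); BPos (ALt y' x'); BPos (ALt x' w');
      BPos (ALt (pq_p k x y x' y') (pq_q k x y x' y'))].
Definition mkphi k c d := bsent_dec (sg k == 1, (eqk k == 1, (c, d))).

Definition Gop : enum_op := fun p =>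
  exists k x y w x' y' w', [/\ y < w, y' < w', okk k x y x' y' = 0 &
     p = (mkalpha k x y w x' y' w', mkphi k (cpair x y) (cpair x' y'))].

Definition codeF k x y w x' y' w' :=
  enc2 (cs (ebs y x) (cs (ebs x w) (cs (ebs y' x') (cs (ebs x' w')
          (cs (ebs (pq_p k x y x' y') (pq_q k x y x' y')) 0)))))
       (enc2 (sg k) (enc2 (eqk k) (enc2 (cpair x y) (cpair x' y')))).

Lemma bsent_decK : cancel bsent_dec bsent_enc.
Proof. by case=> [[] [[] [a b]]]. Qed.

Lemma sg01 k : (sg k == 1 : nat) = sg k.
Proof. by rewrite /sg /iflt; case: (k < 3). Qed.
Lemma eqk01 k : (eqk k == 1 : nat) = eqk k.
Proof. by rewrite /eqk /ifeq; case: (k == 0); case: (k == 6). Qed.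

Lemma pickle_G k x y w x' y' w' :
  pickle (mkalpha k x y w x' y' w', mkphi k (cpair x y) (cpair x' y')) = codeF k x y w x' y' w'.
Proof.
have -> : pickle (mkalpha k x y w x' y' w', mkphi k (cpair x y) (cpair x' y')) =
  CodeSeq.code [:: pickle (mkalpha k x y w x' y' w'); pickle (bsent_enc (mkphi k (cpair x y) (cpair x' y')))] by [].
rewrite /mkphi bsent_decK.
have -> : pickle (mkalpha k x y w x' y' w') = CodeSeq.code (map pickle (mkalpha k x y w x' y' w')) by [].
have E : forall a b, pickle (BPos (ALt a b)) = ebs a b.
  move=> a b. have -> : pickle (BPos (ALt a b)) = CodeSeq.code [:: pickle true; pickle (false, (a, b))] by [].
  have -> : pickle (false, (a, b)) = CodeSeq.code [:: pickle false; pickle (a, b)] by [].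
  have -> : pickle (a, b) = CodeSeq.code [:: a; b] by [].
  by rewrite /ebs /enc2 !code_cons.
rewrite /mkalpha [map _ _]/= !E.
have -> : pickle (sg k == 1, (eqk k == 1, (cpair x y, cpair x' y'))) =
  CodeSeq.code [:: pickle (sg k == 1); CodeSeq.code [:: pickle (eqk k == 1); CodeSeq.code [:: cpair x y; cpair x' y']]] by [].
have -> : pickle (sg k == 1) = sg k. rewrite -[in RHS]sg01. reflexivity.
have -> : pickle (eqk k == 1) = eqk k. rewrite -[in RHS]eqk01. reflexivity.
by rewrite /codeF /enc2 !code_cons.
Qed.

Definition pn v := (unpair v).1.
Definition pt v := (unpair v).2.
Definition pk v := (unpair (pt v)).1.
Definition r1 v := (unpair (pt v)).2.
Definition px v := (unpair (r1 v)).1.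
Definition r2 v := (unpair (r1 v)).2.
Definition py v := (unpair (r2 v)).1.
Definition r3 v := (unpair (r2 v)).2.
Definition pw v := (unpair (r3 v)).1.
Definition r4 v := (unpair (r3 v)).2.
Definition px' v := (unpair (r4 v)).1.
Definition r5 v := (unpair (r4 v)).2.
Definition py' v := (unpair (r5 v)).1.
Definition pw' v := (unpair (r5 v)).2.

Lemma comp_pn : mucomp pn. Proof. exact: comp_v1. Qed.
Lemma comp_pt : mucomp pt. Proof. exact: comp_v2. Qed.
Lemma comp_pk : mucomp pk. Proof. exact: comp_fst comp_pt. Qed.
Lemma comp_r1 : mucomp r1. Proof. exact: comp_snd comp_pt. Qed.
Lemma comp_px : mucomp px. Proof. exact: comp_fst comp_r1. Qed.
Lemma comp_r2 : mucomp r2. Proof. exact: comp_snd comp_r1. Qed.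
Lemma comp_py : mucomp py. Proof. exact: comp_fst comp_r2. Qed.
Lemma comp_r3 : mucomp r3. Proof. exact: comp_snd comp_r2. Qed.
Lemma comp_pw : mucomp pw. Proof. exact: comp_fst comp_r3. Qed.
Lemma comp_r4 : mucomp r4. Proof. exact: comp_snd comp_r3. Qed.
Lemma comp_px' : mucomp px'. Proof. exact: comp_fst comp_r4. Qed.
Lemma comp_r5 : mucomp r5. Proof. exact: comp_snd comp_r4. Qed.
Lemma comp_py' : mucomp py'. Proof. exact: comp_fst comp_r5. Qed.
Lemma comp_pw' : mucomp pw'. Proof. exact: comp_snd comp_r5. Qed.

Definition Pfun v :=
  ifeq (pn v) (codeF (pk v) (px v) (py v) (pw v) (px' v) (py' v) (pw' v)) 0 1
  + iflt (py v) (pw v) 0 1 + iflt (py' v) (pw' v) 0 1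
  + okk (pk v) (px v) (py v) (px' v) (py' v).

Ltac solve_comp :=
  lazymatch goal with
  | |- mucomp (fun _ => ?k) => exact (comp_const k)
  | |- mucomp (fun v => pk v) => exact comp_pk
  | |- mucomp (fun v => px v) => exact comp_px
  | |- mucomp (fun v => py v) => exact comp_py
  | |- mucomp (fun v => pw v) => exact comp_pw
  | |- mucomp (fun v => px' v) => exact comp_px'
  | |- mucomp (fun v => py' v) => exact comp_py'
  | |- mucomp (fun v => pw' v) => exact comp_pw'
  | |- mucomp (fun v => pn v) => exact comp_pn
  | |- mucomp (fun v => cpair (@?a v) (@?b v)) =>
      refine (@comp_pair a b _ _); [solve_comp | solve_comp]
  | |- mucomp (fun v => 2 ^ (@?a v)) => refine (@comp_pow2 a _); solve_comp
  | |- mucomp (fun v => iflt (@?a v) (@?b v) (@?c v) (@?d v)) =>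
      refine (@comp_iflt a b c d _ _ _ _); [solve_comp | solve_comp | solve_comp | solve_comp]
  | |- mucomp (fun v => ifeq (@?a v) (@?b v) (@?c v) (@?d v)) =>
      refine (@comp_ifeq a b c d _ _ _ _); [solve_comp | solve_comp | solve_comp | solve_comp]
  | |- mucomp (fun v => (@?a v) + (@?b v)) => refine (@comp_add a b _ _); [solve_comp | solve_comp]
  | |- mucomp (fun v => (@?a v) * (@?b v)) => refine (@comp_mul a b _ _); [solve_comp | solve_comp]
  | |- mucomp (fun v => (@?a v) - (@?b v)) => refine (@comp_sub a b _ _); [solve_comp | solve_comp]
  | |- mucomp (fun v => (@?a v).+1) => refine (@comp_succ a _); solve_comp
  | |- ?g => idtac g; fail
  end.

Lemma comp_Pfun : mucomp Pfun.
Proof.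
unfold Pfun, codeF, okk, pq_p, pq_q, sg, eqk, ebs, enc2, cs.
Time solve_comp.
Qed.

Lemma ce_set_ext (S1 S2 : nat -> Prop) : (forall n, S1 n <-> S2 n) -> ce_set S1 -> ce_set S2.
Proof. move=> E [c Hc]; exists c => x; rewrite -E; exact: Hc. Qed.

Lemma Pfun0 v : Pfun v = 0 ->
  [/\ pn v = codeF (pk v) (px v) (py v) (pw v) (px' v) (py' v) (pw' v),
      py v < pw v, py' v < pw' v & okk (pk v) (px v) (py v) (px' v) (py' v) = 0].
Proof.
rewrite /Pfun /ifeq /iflt.
case: eqP => // E1; case: ltnP => // E2; case: ltnP => // E3.
Qed.

Lemma Gop_ce : is_enum_op Gop.
Proof.
apply: ce_set_ext (ce_of_comp comp_Pfun) => n; split.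
  move=> [t /Pfun0 [H1 H2 H3 H4]].
  exists (mkalpha (pk (cpair n t)) (px (cpair n t)) (py (cpair n t)) (pw (cpair n t))
            (px' (cpair n t)) (py' (cpair n t)) (pw' (cpair n t)),
          mkphi (pk (cpair n t)) (cpair (px (cpair n t)) (py (cpair n t)))
             (cpair (px' (cpair n t)) (py' (cpair n t)))).
  split; first by rewrite pickle_G -H1 /pn unpair1.
  by do 7 eexists; split; [exact: H2 | exact: H3 | exact: H4 | reflexivity].
move=> [p [<- [k [x [y [w [x' [y' [w' [H1 H2 H3 ->]]]]]]]]]].
exists (cpair k (cpair x (cpair y (cpair w (cpair x' (cpair y' w')))))).
rewrite /Pfun /pn /pk /px /py /pw /px' /py' /pw' /r5 /r4 /r3 /r2 /r1 /pt !unpair_cpair /=.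
by rewrite pickle_G /ifeq /iflt eqxx H1 H2 H3.
Qed.

Definition sto (S : nat -> Prop) (R : nat -> nat -> Prop) :=
  [/\ forall a, S a -> ~ R a a,
      forall a b c, S a -> S b -> S c -> R a b -> R b c -> R a c
    & forall a b, S a -> S b -> [\/ R a b, a = b | R b a]].

Definition Bdom (A : lstruct) (c : nat) : Prop :=
  [/\ sdom A (unpair c).1, sdom A (unpair c).2, slt A (unpair c).2 (unpair c).1 &
      exists w, [/\ sdom A w, slt A (unpair c).1 w & (unpair c).2 < w]].
Definition Blt (A : lstruct) (c d : nat) : Prop :=
  slt A (unpair c).1 (unpair d).1 \/
  ((unpair c).1 = (unpair d).1 /\ slt A (unpair c).2 (unpair d).2).
Definition B0 (A : lstruct) := LStruct (Bdom A) (Blt A).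

Lemma okk_cases k x y x' y' : okk k x y x' y' = 0 ->
  [/\ k = 0, x = x' & y = y'] \/ k = 1 \/ (k = 2 /\ x = x') \/ k = 3 \/
      (k = 4 /\ x = x') \/ [/\ k = 5, x = x' & y = y'] \/ (k = 6 /\ cpair x y <> cpair x' y').
Proof.
rewrite /okk /ifeq /iflt.
case: (eqVneq k 0) => [->|k0]; first by case: eqP => // ->; case: eqP => // ->; left.
case: (eqVneq k 2) => [->|k2]; first by case: eqP => // ->; do 2 right; left.
case: (eqVneq k 4) => [->|k4]; first by case: eqP => // ->; do 4 right; left.
case: (eqVneq k 5) => [->|k5]; first by case: eqP => // ->; case: eqP => // ->; do 5 right; left.
case: (eqVneq k 6) => [->|k6]; first by case: eqP => // ne; do 6 right.
case: ltnP => // lt _.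
have : k = 1 \/ k = 3 by lia.
by case=> ->; [do 1 right; left | do 3 right; left].
Qed.

Lemma in5 (P : bsent -> Prop) a1 a2 a3 a4 a5 :
  P a1 -> P a2 -> P a3 -> P a4 -> P a5 -> forall s, s \in [:: a1; a2; a3; a4; a5] -> P s.
Proof.
move=> h1 h2 h3 h4 h5 s; rewrite !inE.
by do ![case/orP=> [/eqP->//|] | move/eqP->].
Qed.

Lemma diag_lt A a b : diag A (BPos (ALt a b)) <-> [/\ sdom A a, sdom A b & slt A a b].
Proof. by []. Qed.

Lemma cpair_unpairE c : c = cpair (unpair c).1 (unpair c).2.
Proof. by rewrite cpair_unpair. Qed.

Lemma mk_apply A k x y w x' y' w' phi : y < w -> y' < w' -> okk k x y x' y' = 0 ->
  phi = mkphi k (cpair x y) (cpair x' y') ->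
  diag A (BPos (ALt y x)) -> diag A (BPos (ALt x w)) -> diag A (BPos (ALt y' x')) ->
  diag A (BPos (ALt x' w')) -> diag A (BPos (ALt (pq_p k x y x' y') (pq_q k x y x' y'))) ->
  apply_op Gop (diag A) phi.
Proof.
move=> h1 h2 h3 -> d1 d2 d3 d4 d5; exists (mkalpha k x y w x' y' w'); split.
  by exists k, x, y, w, x', y', w'.
exact: in5.
Qed.

Lemma Bdom_w A c : Bdom A c -> exists w,
  [/\ diag A (BPos (ALt (unpair c).2 (unpair c).1)), diag A (BPos (ALt (unpair c).1 w)) & (unpair c).2 < w].
Proof. by case=> d1 d2 l [w [d3 l2 lt]]; exists w. Qed.

Lemma diag_B0 A : sto (sdom A) (slt A) ->
  forall phi, apply_op Gop (diag A) phi <-> diag (B0 A) phi.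
Proof.
move=> [irr tr tot] phi; split.
  move=> [alpha [[k [x [y [w [x' [y' [w' [Hyw Hyw' Hok [-> ->]]]]]]]]] Hin]].
  have D : forall a b, BPos (ALt a b) \in mkalpha k x y w x' y' w' -> [/\ sdom A a, sdom A b & slt A a b].
    by move=> a b /Hin.
  have [dy dx lyx] := D y x (mem_head _ _).
  have [_ dw lxw] : [/\ sdom A x, sdom A w & slt A x w] by apply: D; rewrite !inE eqxx !orbT.
  have [dy' dx' lyx'] : [/\ sdom A y', sdom A x' & slt A y' x'] by apply: D; rewrite !inE eqxx !orbT.
  have [_ dw' lxw'] : [/\ sdom A x', sdom A w' & slt A x' w'] by apply: D; rewrite !inE eqxx !orbT.
  have Dpq : [/\ sdom A (pq_p k x y x' y'), sdom A (pq_q k x y x' y') & slt A (pq_p k x y x' y') (pq_q k x y x' y')].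
    by apply: D; rewrite !inE eqxx !orbT.
  have Bc : Bdom A (cpair x y).
    rewrite /Bdom !unpair_cpair /=; split => //; by exists w.
  have Bd : Bdom A (cpair x' y').
    rewrite /Bdom !unpair_cpair /=; split => //; by exists w'.
  case/okk_cases: Hok => [[Ek Ex Ey]|[Ek|[[Ek Ex]|[Ek|[[Ek Ex]|[[Ek Ex Ey]|[Ek ne]]]]]]]; subst;
    move: Dpq; rewrite /mkphi /sg /eqk /iflt /ifeq /pq_p /pq_q /ifeq /= => -[_ _ h]; split => //;
    try rewrite /Blt ?unpair_cpair /=.
  all: try by [left | right].
  all: try (case=> [h1|[e h1]]; try subst).
  all: try by [apply: (irr _ _ h1) | apply: (irr _ _ h) | apply: (irr _ _ (tr _ _ _ _ _ _ h1 h)) | apply: (irr _ _ (tr _ _ _ _ _ _ h h1))].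
  case: phi => [[c d|c d]|[c d|c d]] /=.
  - move=> [Bc Bd E]; subst d.
    have [w [d1 d2 lt]] := Bdom_w Bc.
    apply: (@mk_apply A 0 (unpair c).1 (unpair c).2 w (unpair c).1 (unpair c).2 w) => //; rewrite ?cpair_unpair //; unfold okk, pq_p, pq_q, ifeq, iflt; rewrite /= ?eqxx //.
  - move=> [Bc Bd L].
    have [w [d1 d2 lt]] := Bdom_w Bc. have [w' [d1' d2' lt']] := Bdom_w Bd.
    case: L => [L|[E L]].
      apply: (@mk_apply A 1 (unpair c).1 (unpair c).2 w (unpair d).1 (unpair d).2 w') => //; rewrite ?cpair_unpair //; unfold okk, pq_p, pq_q, ifeq, iflt; rewrite /= ?eqxx //.
      by case: Bc; case: Bd.
    apply: (@mk_apply A 2 (unpair c).1 (unpair c).2 w (unpair d).1 (unpair d).2 w') => //; rewrite ?cpair_unpair //; unfold okk, pq_p, pq_q, ifeq, iflt; rewrite /= ?eqxx //.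
      by rewrite E eqxx.
    by case: Bc; case: Bd.
  - move=> [Bc Bd E].
    have [w [d1 d2 lt]] := Bdom_w Bc. have [w' [d1' d2' lt']] := Bdom_w Bd.
    apply: (@mk_apply A 6 (unpair c).1 (unpair c).2 w (unpair d).1 (unpair d).2 w') => //; rewrite ?cpair_unpair //; unfold okk, pq_p, pq_q, ifeq, iflt; rewrite /= ?eqxx //.
    by rewrite !cpair_unpair; case: eqP.
  - move=> [Bc Bd L].
    have [w [d1 d2 lt]] := Bdom_w Bc. have [w' [d1' d2' lt']] := Bdom_w Bd.
    move: (Bc) (Bd) => [dx dy _ _] [dx' dy' _ _].
    case: (tot _ _ dx dx') => [h|E|h].
    + by case: L; left.
    + case: (tot _ _ dy dy') => [h|E2|h].
      * by case: L; right.
      * apply: (@mk_apply A 5 (unpair c).1 (unpair c).2 w (unpair d).1 (unpair d).2 w') => //; rewrite ?cpair_unpair //; unfold okk, pq_p, pq_q, ifeq, iflt; rewrite /= ?eqxx //.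
          by rewrite E E2 !eqxx.
      * apply: (@mk_apply A 4 (unpair c).1 (unpair c).2 w (unpair d).1 (unpair d).2 w') => //; rewrite ?cpair_unpair //; unfold okk, pq_p, pq_q, ifeq, iflt; rewrite /= ?eqxx //.
          by rewrite E !eqxx.
    + apply: (@mk_apply A 3 (unpair c).1 (unpair c).2 w (unpair d).1 (unpair d).2 w') => //; rewrite ?cpair_unpair //; unfold okk, pq_p, pq_q, ifeq, iflt; rewrite /= ?eqxx //.
Qed.

Definition dP (P : Prop) : bool := if excluded_middle_informative P then true else false.
Lemma dPP P : reflect P (dP P).
Proof. by rewrite /dP; case: excluded_middle_informative => h; constructor. Qed.

Lemma blocks (I T : Type) (ltI : I -> I -> Prop) (Q : T -> T -> Prop)
  (S : nat -> Prop) (R : nat -> nat -> Prop) (blk : nat -> I) :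
  (forall a b, S a -> S b -> R a b -> ~ R b a) ->
  (forall i j, ltI i j -> ~ ltI j i) ->
  (forall i j, i <> j -> ltI i j \/ ltI j i) ->
  (forall a b, S a -> S b -> ltI (blk a) (blk b) -> R a b) ->
  (forall i, iso_to (LStruct (fun a => S a /\ blk a = i) R) Q) ->
  iso_to (LStruct S R) (lex ltI Q).
Proof.
move=> asR asI totI mono Hb.
pose hh i := proj1_sig (constructive_indefinite_description _ (Hb i)).
have hhP : forall i, _ := fun i => proj2_sig (constructive_indefinite_description _ (Hb i)).
exists (fun a => (blk a, hh (blk a) a)); split => /=.
- move=> a b Sa Sb [E1 E2]. have [inj _ _] := hhP (blk a).
  apply: inj => //=. by rewrite E1 in E2 *.
- case=> i t. have [_ sur _] := hhP i. have [a [Sa Ea] <-] := sur t.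
  by exists a => //; rewrite Ea.
- move=> a b Sa Sb. rewrite /lex /=.
  case: (classic (blk a = blk b)) => E.
    have [_ _ ord] := hhP (blk a). have Hab := ord a b (conj Sa erefl) (conj Sb (esym E)).
    simpl in Hab. rewrite -E. split.
      by move/Hab => h; right.
    by case=> [h|[_ /Hab h]] //; case: (asI _ _ h h).
  case: (totI _ _ E) => h.
    by split=> _; [left | apply: mono].
  split.
    move=> r; case: (asR _ _ Sa Sb r); exact: mono.
  by case=> [h'|[h' _]] //; case: (asI _ _ h h').
Qed.

Lemma flip_iso (T : Type) (Q : T -> T -> Prop) S R :
  iso_to (LStruct S (fun a b => R b a)) Q -> iso_to (LStruct S R) (fun s t => Q t s).
Proof. by move=> [h [h1 h2 h3]]; exists h; split => // a b Sa Sb; apply: h3. Qed.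

Lemma count_sub (T : Type) (p q : pred T) s : (forall x, p x -> q x) -> count p s <= count q s.
Proof.
move=> H; elim: s => //= x s IH. case: (boolP (p x)) => px; first by rewrite (H _ px); lia.
case: (q x); lia.
Qed.

Lemma count_strict (T : eqType) (p q : pred T) s x0 : (forall x, p x -> q x) ->
  x0 \in s -> q x0 -> ~~ p x0 -> count p s < count q s.
Proof.
move=> H; elim: s => //= x s IH. rewrite inE => /orP [/eqP <-|xs] qx px.
  by rewrite qx (negbTE px) add0n add1n ltnS count_sub.
have := IH xs qx px. case: (boolP (p x)) => pxx; first by rewrite (H _ pxx); lia.
case: (q x); lia.
Qed.

Section OmegaCrit.
Variables (S : nat -> Prop) (R : nat -> nat -> Prop).
Hypothesis Hsto : sto S R.
Hypothesis Hfin : forall a, S a -> exists N, forall b, S b -> R b a -> b < N.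
Hypothesis Hinf : forall N, exists a, S a /\ N <= a.

Definition bnd a := epsilon (inhabits 0) (fun N => forall b, S b -> R b a -> b < N).
Lemma bndP a : S a -> forall b, S b -> R b a -> b < bnd a.
Proof. move=> Sa; exact: (epsilon_spec (inhabits 0) (fun N => forall b, S b -> R b a -> b < N) (Hfin Sa)). Qed.

Definition predA a := fun b => dP (S b /\ R b a).
Definition rank a := count (predA a) (iota 0 (bnd a)).

Lemma rank_any a M : S a -> bnd a <= M -> rank a = count (predA a) (iota 0 M).
Proof.
move=> Sa le. rewrite -(subnKC le) iotaD count_cat /rank.
suff -> : count (predA a) (iota (0 + bnd a) (M - bnd a)) = 0 by rewrite addn0.
apply/eqP; rewrite -leqn0 leqNgt -has_count; apply/hasPn => b.
rewrite mem_iota add0n => /andP [h _]. apply/dPP => -[Sb Rb].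
have := bndP Sa Sb Rb; lia.
Qed.

Lemma rank_lt a b : S a -> S b -> R a b -> rank a < rank b.
Proof.
move=> Sa Sb Rab. have [irr tr tot] := Hsto.
rewrite (@rank_any a (maxn (bnd a) (bnd b))) ?leq_maxl //.
rewrite (@rank_any b (maxn (bnd a) (bnd b))) ?leq_maxr //.
apply: (@count_strict _ _ _ _ a).
- move=> c /dPP [Sc Rc]; apply/dPP; split => //; exact: tr Rc Rab.
- rewrite mem_iota add0n; have := bndP Sb Sa Rab; lia.
- by apply/dPP.
- by apply/dPP => -[_ h]; exact: irr h.
Qed.

Lemma rank_inj a b : S a -> S b -> rank a = rank b -> a = b.
Proof.
move=> Sa Sb E. have [irr tr tot] := Hsto.
case: (tot _ _ Sa Sb) => // h; [have := rank_lt Sa Sb h | have := rank_lt Sb Sa h]; lia.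
Qed.

Lemma rank_unbounded K : exists a, S a /\ K <= rank a.
Proof.
have [irr tr tot] := Hsto.
elim: K => [|K [a [Sa Ka]]]; first by have [a [Sa _]] := Hinf 0; exists a.
have [b [Sb Hb]] := Hinf (maxn (bnd a) a.+1).
exists b; split => //.
case: (tot _ _ Sa Sb) => [h|E|h].
- have := rank_lt Sa Sb h; lia.
- subst; lia.
- have := bndP Sa Sb h; lia.
Qed.

Lemma rank_down b k : S b -> k < rank b -> exists a, S a /\ rank a = k.
Proof.
move=> Sb lt.
pose l := filter (predA b) (iota 0 (bnd b)).
have Ul : uniq l by rewrite filter_uniq // iota_uniq.
have Sl : forall c, c \in l -> S c /\ R c b by move=> c; rewrite mem_filter => /andP [/dPP h _].
have U : uniq (map rank l).
  rewrite map_inj_in_uniq // => c d /Sl [Sc _] /Sl [Sd _]; exact: rank_inj.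
have sub : {subset map rank l <= iota 0 (rank b)}.
  move=> r /mapP [c /Sl [Sc Rc] ->]; rewrite mem_iota add0n; exact: rank_lt.
have sz : size (iota 0 (rank b)) <= size (map rank l) by rewrite size_map size_filter size_iota.
have [_ E] := uniq_min_size U sub sz.
have : k \in map rank l by rewrite E mem_iota add0n.
by case/mapP => a /Sl [Sa _] ->; exists a.
Qed.

Lemma omega_crit : iso_to (LStruct S R) nat_lt.
Proof.
have [irr tr tot] := Hsto.
exists rank; split => /=.
- move=> a b Sa Sb; exact: rank_inj.
- move=> k. have [b [Sb Kb]] := rank_unbounded k.+1.
  by have [a [Sa Ea]] := rank_down Sb Kb; exists a.
- move=> a b Sa Sb; split; first exact: rank_lt.
  rewrite /nat_lt => h. case: (tot _ _ Sa Sb) => [//|E|h'].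
  + subst; lia.
  + have := rank_lt Sb Sa h'; lia.
Qed.
End OmegaCrit.

Definition coordL (A : lstruct) (m : nat) (dir : bool) (Q K : nat -> nat) :=
 [/\ forall x, sdom A x -> Q x < m,
     forall x y, sdom A x -> sdom A y -> Q x = Q y -> K x = K y -> x = y,
     forall q k, q < m -> exists x, [/\ sdom A x, Q x = q & K x = k]
   & forall x y, sdom A x -> sdom A y ->
       (slt A x y <-> Q x < Q y \/ (Q x = Q y /\ (if dir then K x < K y else K y < K x)))].

Lemma coord_of (A : lstruct) m (dir : bool) :
  iso_to A (lex (@ord_lt m) (fun a b : nat => if dir then nat_lt a b else nat_lt b a)) ->
  exists Q K, coordL A m dir Q K.
Proof.
move=> [f [inj sur ord]].
exists (fun x => nat_of_ord (f x).1), (fun x => (f x).2); split.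
- by move=> x _; case: (f x).1.
- move=> x y dx dy E1 E2; apply: inj => //.
  by case: (f x) (f y) E1 E2 => [i k] [j l] /= /val_inj -> ->.
- move=> q k lt. have [x dx E] := sur (Ordinal lt, k). by exists x; rewrite E.
- move=> x y dx dy. rewrite ord // /lex /ord_lt /nat_lt.
  split; case=> [h|[h1 h2]].
  - by left.
  - right; split; [exact: (congr1 (@nat_of_ord m) h1) | by case: dir h2 {ord}].
  - by left.
  - right; split; [exact: val_inj | by case: dir h2 {ord}].
Qed.

Section Coord.
Variables (A : lstruct) (m : nat) (dir : bool) (Q K : nat -> nat).
Hypothesis HC : coordL A m dir Q K.

Lemma coord_sto : sto (sdom A) (slt A).
Proof.
have [qm inj ex ord] := HC.
split.
- move=> a da; rewrite ord //; case: dir; lia.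
- move=> a b c da db dc; rewrite !ord //; case: dir; lia.
- move=> a b da db; have O1 := ord a b da db; have O2 := ord b a db da.
  case: (ltngtP (Q a) (Q b)) => h; [by constructor 1; apply/O1; left| by constructor 3; apply/O2; left|].
  case: (ltngtP (K a) (K b)) => h2.
  + by case: dir O1 O2 => O1 O2; [constructor 1; apply/O1 | constructor 3; apply/O2]; right.
  + by case: dir O1 O2 => O1 O2; [constructor 3; apply/O2 | constructor 1; apply/O1]; right.
  + by constructor 2; apply: inj.
Qed.

Definition Xof q k := epsilon (inhabits 0) (fun x => [/\ sdom A x, Q x = q & K x = k]).
Lemma XofP q k : q < m -> [/\ sdom A (Xof q k), Q (Xof q k) = q & K (Xof q k) = k].
Proof.
move=> lt; have [_ _ ex _] := HC.
exact: (epsilon_spec (inhabits 0) (fun x => [/\ sdom A x, Q x = q & K x = k]) (ex q k lt)).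
Qed.

Lemma coord_bounded R0 : exists N, forall x, sdom A x -> K x <= R0 -> x < N.
Proof.
have [qm inj ex ord] := HC.
exists (\max_(q < m) \max_(r < R0.+1) (Xof q r)).+1 => x dx le.
have [d1 e1 e2] := XofP (K x) (qm x dx).
have -> : x = Xof (Q x) (K x) by apply: inj.
rewrite ltnS.
apply: (@leq_trans (\max_(r < R0.+1) Xof (Q x) r)).
  exact: (@leq_bigmax_cond _ _ (fun r : 'I_R0.+1 => Xof (Q x) r) (Ordinal (n:=R0.+1) (m:=K x) ltac:(lia))).
exact: (@leq_bigmax_cond _ _ (fun q : 'I_m => \max_(r < R0.+1) Xof q r) (Ordinal (qm x dx))).
Qed.

Lemma coord_unbounded q k0 N : q < m -> exists x, [/\ sdom A x, Q x = q, k0 <= K x & N <= x].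
Proof.
move=> lt. have [qm inj ex ord] := HC.
apply: NNPP => H.
have small : forall r, Xof q (k0 + r) < N.
  move=> r; have [d e1 e2] := XofP (k0 + r) lt.
  case: (leqP N (Xof q (k0 + r))) => // h; case: H; exists (Xof q (k0 + r)); split => //; lia.
pose g (r : 'I_N.+1) : 'I_N := Ordinal (small r).
have ginj : injective g.
  move=> r s /(congr1 val) /= E. apply: val_inj => /=.
  have [d1 e1 f1] := XofP (k0 + r) lt. have [d2 e2 f2] := XofP (k0 + s) lt.
  have := congr1 K E. rewrite f1 f2. lia.
have := leq_card g ginj; rewrite !card_ord; lia.
Qed.
End Coord.

Lemma B0_sto A : sto (sdom A) (slt A) -> sto (Bdom A) (Blt A).
Proof.
move=> [irr tr tot]; split.
- move=> a [dx dy _ _] [h|[_ h]]; [exact: irr h | exact: irr h].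
- move=> a b c [dxa dya _ _] [dxb dyb _ _] [dxc dyc _ _] h1 h2; rewrite /Blt in h1 h2 *.
  case: h1 => [h1|[e1 h1]]; case: h2 => [h2|[e2 h2]].
  + by left; exact: tr h1 h2.
  + by left; rewrite -e2.
  + by left; rewrite e1.
  + by right; split; [rewrite e1 | exact: tr h1 h2].
- move=> a b [dxa dya _ _] [dxb dyb _ _]; rewrite /Blt.
  case: (tot _ _ dxa dxb) => [h|e|h]; [by constructor 1; left | | by constructor 3; left].
  case: (tot _ _ dya dyb) => [h|e2|h]; [by constructor 1; right | | by constructor 3; right].
  by constructor 2; rewrite (cpair_unpairE a) (cpair_unpairE b) e e2.
Qed.

Lemma sto_sub S S' R : sto S R -> (forall a, S' a -> S a) -> sto S' R.
Proof.
move=> [irr tr tot] sub; split.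
- by move=> a /sub; apply: irr.
- by move=> a b c /sub ? /sub ? /sub ?; apply: tr.
- by move=> a b /sub ? /sub ?; apply: tot.
Qed.

Lemma sto_flip S R : sto S R -> sto S (fun a b => R b a).
Proof.
move=> [irr tr tot]; split.
- by move=> a /irr.
- by move=> a b c Sa Sb Sc h1 h2; apply: tr h2 h1.
- by move=> a b Sa Sb; case: (tot _ _ Sa Sb) => h; [constructor 3|constructor 2|constructor 1].
Qed.

Lemma sto_asym S R : sto S R -> forall a b, S a -> S b -> R a b -> ~ R b a.
Proof. move=> [irr tr tot] a b Sa Sb h1 h2; exact: irr (tr _ _ _ Sa Sb Sa h1 h2). Qed.

Lemma divmod_eq q a b c d : b < q -> d < q -> a * q + b = c * q + d -> a = c /\ b = d.
Proof.
move=> hb hd E. have q0 : 0 < q by apply: leq_ltn_trans hb.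
have E1 : (a * q + b) %/ q = (c * q + d) %/ q by rewrite E.
have E2 : (a * q + b) %% q = (c * q + d) %% q by rewrite E.
rewrite !divnMDl // !divn_small // !addn0 in E1.
rewrite !modnMDl !modn_small // in E2.
Qed.

Lemma divmod_lt q a b c d : b < q -> d < q -> a * q + b < c * q + d -> a < c \/ (a = c /\ b < d).
Proof.
move=> hb hd E. case: (ltngtP a c) => h; [by left| |].
  have h2 : c.+1 * q <= a * q by rewrite leq_mul2r h orbT.
  exfalso. lia.
subst. right; split => //. by rewrite ltn_add2l in E.
Qed.

Lemma diag_iso_to (B C : lstruct) (T : Type) (R : T -> T -> Prop) :
  (forall phi, diag B phi <-> diag C phi) -> iso_to C R -> iso_to B R.
Proof.
move=> E [f [inj sur ord]].
have D : forall x, sdom B x <-> sdom C x.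
  move=> x; have := E (BPos (AEq x x)); rewrite /diag /=; split.
    by move=> h; have [] := (H.1 (And3 h h erefl)).
  by move=> h; have [] := (H.2 (And3 h h erefl)).
have L : forall x y, sdom B x -> sdom B y -> (slt B x y <-> slt C x y).
  move=> x y dx dy; have := E (BPos (ALt x y)); rewrite /diag /= => H; split.
    by move=> h; case: (H.1 (And3 dx dy h)).
  by move=> h; case: (H.2 (And3 ((D x).1 dx) ((D y).1 dy) h)).
exists f; split.
- move=> x y /D dx /D dy; exact: inj.
- move=> t; have [x /D dx e] := sur t; by exists x.
- move=> x y dx dy; rewrite L //; apply: ord; exact/D.
Qed.

Lemma iso_to_iso (X Y : lstruct) (T : Type) (R : T -> T -> Prop) :
  iso_to X R -> iso_to Y R -> iso X Y.
Proof.
move=> [f [fi fs fo]] [g [gi gs go]].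
pose ginv t := epsilon (inhabits 0) (fun y => sdom Y y /\ g y = t).
have ginvP : forall t, sdom Y (ginv t) /\ g (ginv t) = t.
  move=> t; have [y dy e] := gs t.
  exact: (epsilon_spec (inhabits 0) (fun y => sdom Y y /\ g y = t) (ex_intro _ y (conj dy e))).
exists (fun x => ginv (f x)); split.
- by move=> x; have [] := ginvP (f x).
- move=> x y dx dy E; apply: fi => //.
  by rewrite -(ginvP (f x)).2 -(ginvP (f y)).2 E.
- move=> y dy; have [x dx e] := fs (g y); exists x => //.
  rewrite e; apply: gi => //; [exact: (ginvP _).1 | exact: (ginvP _).2].
- move=> x y dx dy; rewrite fo // go; try exact: (ginvP _).1.
  by rewrite !(ginvP _).2.
Qed.

Lemma iso_trans_to (X Y : lstruct) (T : Type) (R : T -> T -> Prop) :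
  iso X Y -> iso_to Y R -> iso_to X R.
Proof.
move=> [h [h1 h2 h3 h4]] [g [gi gs go]].
exists (fun x => g (h x)); split.
- move=> x y dx dy E; apply: h2 => //; apply: gi => //; exact: h1.
- move=> t; have [y dy <-] := gs t; have [x dx <-] := h3 y dy; by exists x.
- move=> x y dx dy; rewrite h4 // go //; exact: h1.
Qed.

Lemma excl (X : lstruct) (T1 T2 : Type) (R1 : T1 -> T1 -> Prop) (R2 : T2 -> T2 -> Prop) :
  iso_to X R1 -> iso_to X R2 ->
  (exists t0, forall t, t <> t0 -> R1 t0 t) -> (forall t, exists t', R2 t' t) ->
  (forall s t, R1 s t -> ~ R1 t s) -> False.
Proof.
move=> [f [fi fs fo]] [g [gi gs go]] [t0 Ht0] Hno asym.
have [x0 dx0 e0] := fs t0.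
have [t' Ht'] := Hno (g x0).
have [x1 dx1 e1] := gs t'.
have L : slt X x1 x0 by apply/go => //; rewrite e1.
have L1 := (fo _ _ dx1 dx0).1 L. rewrite e0 in L1.
have ne : f x1 <> t0.
  move=> E; have ex : x1 = x0 by apply: fi => //; rewrite E e0.
  by subst; apply: (asym _ _ L1 L1).
exact: (asym _ _ L1 (Ht0 _ ne)).
Qed.

Definition blk2L (i q k j : nat) : nat :=
  if q == 0 then 0 else if j < q then (i == 0) + k * q + j else (i == 0) + k.+1 * q.

Lemma L_fin i qa ka ja ma qb kb jb mb :
  (ja < qa \/ (ja = qa /\ ma < ka)) -> (jb < qb \/ (jb = qb /\ mb < kb)) ->
  qa.-1 = i -> qb.-1 = i -> blk2L i qa ka ja = blk2L i qb kb jb ->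
  (qb < qa \/ (qb = qa /\ kb < ka) \/ (qb = qa /\ kb = ka /\ (jb < ja \/ (jb = ja /\ mb < ma)))) ->
  kb <= ka + ma /\ mb <= ka + ma.
Proof.
rewrite /blk2L => ya yb ia ib E L.
case: (eqVneq qa 0) => [qa0|qa0] in E *.
  subst qa. case: (eqVneq qb 0) => [qb0|qb0] in E *.
    subst qb; lia.
  move: E; case: ltnP => _; lia.
case: (eqVneq qb 0) => [qb0|qb0] in E *.
  move: E; case: ltnP => _; lia.
have Eq : qa = qb by lia. subst qb.
have kle : kb <= ka by lia.
case: (ltnP jb qa) => hb in E *; last by lia.
case: (ltnP ja qa) => ha in E *.
  have E' : kb * qa + jb = ka * qa + ja by lia.
  have [e1 e2] := divmod_eq hb ha E'.
  lia.
have h0 : 0 < qa by lia.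
have := @divmod_eq qa kb jb ka.+1 0 hb h0. rewrite addn0.
have : kb * qa + jb = ka.+1 * qa by lia.
move=> e /(_ e); lia.
Qed.

Lemma L_mono i qa ka ja ma qb kb jb mb :
  (ja < qa \/ (ja = qa /\ ma < ka)) -> (jb < qb \/ (jb = qb /\ mb < kb)) ->
  qa.-1 = i -> qb.-1 = i -> blk2L i qa ka ja < blk2L i qb kb jb ->
  (qa < qb \/ (qa = qb /\ ka < kb) \/ (qa = qb /\ ka = kb /\ (ja < jb \/ (ja = jb /\ ma < mb)))).
Proof.
rewrite /blk2L => ya yb ia ib E.
case: (eqVneq qa 0) => [qa0|qa0] in E *.
  subst qa. case: (eqVneq qb 0) => [qb0|qb0] in E *; [subst; lia | lia].
case: (eqVneq qb 0) => [qb0|qb0] in E *; first lia.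
have Eq : qa = qb by lia. subst qb.
have h0 : 0 < qa by lia.
case: (ltnP ja qa) => ha in E *; case: (ltnP jb qa) => hb in E *.
- have := @divmod_lt qa ka ja kb jb ha hb ltac:(lia). lia.
- have := @divmod_lt qa ka ja kb.+1 0 ha h0 ltac:(lia). lia.
- have := @divmod_lt qa ka.+1 0 kb jb h0 hb ltac:(lia). lia.
- have := @divmod_lt qa ka.+1 0 kb.+1 0 h0 h0 ltac:(lia). lia.
Qed.

Section LCase.
Variables (A : lstruct) (n' : nat) (Q K : nat -> nat).
Hypothesis HC : coordL A n'.+2 true Q K.

Local Notation X c := (unpair c).1.
Local Notation Y c := (unpair c).2.

Lemma L_ltE a b : sdom A a -> sdom A b -> (slt A a b <-> Q a < Q b \/ (Q a = Q b /\ K a < K b)).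
Proof. have [_ _ _ ord] := HC; exact: ord. Qed.

Lemma L_eqE a b : sdom A a -> sdom A b -> (a = b <-> Q a = Q b /\ K a = K b).
Proof. have [_ inj _ _] := HC => da db; split => [->//|[]]; exact: inj. Qed.

Lemma L_dom c : Bdom A c <-> [/\ sdom A (X c), sdom A (Y c) & slt A (Y c) (X c)].
Proof.
split; first by case.
move=> [dx dy l]; split => //.
have [qm _ _ _] := HC.
have [w [dw e1 e2 e3]] := coord_unbounded HC (K (X c)).+1 (Y c).+1 (qm _ dx).
exists w; split => //. apply/L_ltE => //; lia.
Qed.

Lemma L_BltE a b : Bdom A a -> Bdom A b ->
  (Blt A a b <-> (Q (X a) < Q (X b) \/ (Q (X a) = Q (X b) /\ K (X a) < K (X b)) \/
     (Q (X a) = Q (X b) /\ K (X a) = K (X b) /\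
       (Q (Y a) < Q (Y b) \/ (Q (Y a) = Q (Y b) /\ K (Y a) < K (Y b)))))).
Proof.
move=> [dxa dya _ _] [dxb dyb _ _]; rewrite /Blt (L_ltE dxa dxb) (L_eqE dxa dxb) (L_ltE dya dyb).
tauto.
Qed.

Lemma L_yx c : Bdom A c -> Q (Y c) < Q (X c) \/ (Q (Y c) = Q (X c) /\ K (Y c) < K (X c)).
Proof. by move=> [dx dy l _]; apply/L_ltE. Qed.

Definition blk1L c : 'I_n'.+1 := inord (Q (X c)).-1.
Definition blk2c (i : nat) c := blk2L i (Q (X c)) (K (X c)) (Q (Y c)).

Lemma blk1LE c (i : 'I_n'.+1) : Bdom A c -> (blk1L c = i <-> (Q (X c)).-1 = i).
Proof.
move=> [dx _ _ _]; have [qm _ _ _] := HC; have := qm _ dx => lt.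
rewrite /blk1L; split => [<-|E]; first by rewrite inordK //; lia.
by apply: val_inj; rewrite /= inordK //; lia.
Qed.

Lemma Bsto : sto (Bdom A) (Blt A).
Proof. exact: B0_sto (coord_sto HC). Qed.

Lemma code_bound R0 : exists N, forall b, Bdom A b -> K (X b) <= R0 -> K (Y b) <= R0 -> b < N.
Proof.
have [N HN] := coord_bounded HC R0.
exists (cpair N N).+1 => b [dx dy _ _] h1 h2.
rewrite (cpair_unpairE b) ltnS; apply: cpair_mono; apply: ltnW; exact: HN.
Qed.

Lemma L_sub (i : 'I_n'.+1) K' :
  iso_to (LStruct (fun a => (Bdom A a /\ blk1L a = i) /\ blk2c i a = K') (Blt A)) nat_lt.
Proof.
apply: omega_crit.
- exact: (sto_sub Bsto (fun a (h : (Bdom A a /\ blk1L a = i) /\ blk2c i a = K') => h.1.1)).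
- move=> a [[Ba /(blk1LE _ Ba) ia] Ka].
  have [N HN] := code_bound (K (X a) + K (Y a)).
  exists N => b [[Bb /(blk1LE _ Bb) ib] Kb] L.
  have E : blk2c i a = blk2c i b by rewrite Ka Kb.
  have := L_fin (L_yx Ba) (L_yx Bb) ia ib E ((L_BltE Bb Ba).1 L).
  move=> [h1 h2]; apply: HN => //.
- move=> N. have [qm _ _ _] := HC.
  case: (boolP ((i == 0 :> nat) && (K' == 0))) => [/andP [/eqP i0 /eqP K0]|nz].
    have [x [dx qx kx nx]] := coord_unbounded HC 1 N (ltn0Sn n'.+1 : 0 < n'.+2).
    have [dy qy ky] := XofP HC 0 (ltn0Sn n'.+1 : 0 < n'.+2).
    exists (cpair x (Xof A Q K 0 0)); split; last by apply: leq_trans nx (cpair_geL _ _).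
    have B : Bdom A (cpair x (Xof A Q K 0 0)).
      apply/L_dom; rewrite !unpair_cpair /=; split => //; apply/L_ltE => //; lia.
    split; first split => //.
      by apply/(blk1LE _ B); rewrite unpair_cpair /= qx i0.
    by rewrite /blk2c /blk2L !unpair_cpair /= qx K0.
  pose q := (i : nat).+1. pose K'' := K' - (i == 0 :> nat).
  have q0 : 0 < q by [].
  have jq : K'' %% q < q by rewrite ltn_mod.
  have qlt : q < n'.+2 by rewrite /q; have := ltn_ord i; lia.
  have [dx qx kx] := XofP HC (K'' %/ q) qlt.
  have [y [dy qy ky ny]] := coord_unbounded HC 0 N (ltn_trans jq qlt).
  exists (cpair (Xof A Q K q (K'' %/ q)) y); split; last by apply: leq_trans ny (cpair_geR _ _).
  have B : Bdom A (cpair (Xof A Q K q (K'' %/ q)) y).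
    apply/L_dom; rewrite !unpair_cpair /=; split => //; apply/L_ltE => //; lia.
  split; first split => //.
    by apply/(blk1LE _ B); rewrite unpair_cpair /= qx.
  rewrite /blk2c /blk2L !unpair_cpair /= qx kx qy jq.
  have -> : (q == 0) = false by [].
  have := divn_eq K'' q. move: nz. rewrite /K''. case: (i == 0 :> nat) => /=; lia.
Qed.

Lemma L_block (i : 'I_n'.+1) :
  iso_to (LStruct (fun a => Bdom A a /\ blk1L a = i) (Blt A)) omega2_lt.
Proof.
apply: (@blocks nat nat nat_lt nat_lt _ _ (blk2c i)).
- exact: (sto_asym (sto_sub Bsto (fun a (h : Bdom A a /\ blk1L a = i) => h.1))).
- rewrite /nat_lt => a b; lia.
- rewrite /nat_lt => a b; lia.
- move=> a b [Ba /(blk1LE _ Ba) ia] [Bb /(blk1LE _ Bb) ib] lt.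
  apply/(L_BltE Ba Bb).
  exact: (@L_mono i _ _ _ (K (Y a)) _ _ _ (K (Y b)) (L_yx Ba) (L_yx Bb) ia ib lt).
- exact: L_sub.
Qed.

Lemma L_main : iso_to (B0 A) (lex (@ord_lt n'.+1) omega2_lt).
Proof.
rewrite /B0; apply: (@blocks _ _ _ _ _ _ blk1L).
- exact: sto_asym Bsto.
- rewrite /ord_lt => a b; lia.
- rewrite /ord_lt => a b ne. case: (ltngtP a b) => h; [by left|by right|].
  by case: ne; apply: val_inj.
- move=> a b Ba Bb; rewrite /ord_lt /blk1L.
  have [qm _ _ _] := HC. move: (Ba) (Bb) => [dxa _ _ _] [dxb _ _ _].
  have h1 := qm _ dxa; have h2 := qm _ dxb.
  rewrite !inordK; try lia.
  move=> lt; apply/(L_BltE Ba Bb); lia.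
- move=> i; exact: L_block.
Qed.
End LCase.

Section MCase.
Variables (A : lstruct) (n' : nat) (Q K : nat -> nat).
Hypothesis HC : coordL A n'.+2 false Q K.

Local Notation X c := (unpair c).1.
Local Notation Y c := (unpair c).2.

Lemma M_ltE a b : sdom A a -> sdom A b -> (slt A a b <-> Q a < Q b \/ (Q a = Q b /\ K b < K a)).
Proof. have [_ _ _ ord] := HC; exact: ord. Qed.

Lemma M_eqE a b : sdom A a -> sdom A b -> (a = b <-> Q a = Q b /\ K a = K b).
Proof. have [_ inj _ _] := HC => da db; split => [->//|[]]; exact: inj. Qed.

Lemma M_BltE a b : Bdom A a -> Bdom A b ->
  (Blt A a b <-> (Q (X a) < Q (X b) \/ (Q (X a) = Q (X b) /\ K (X b) < K (X a)) \/
     (Q (X a) = Q (X b) /\ K (X a) = K (X b) /\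
       (Q (Y a) < Q (Y b) \/ (Q (Y a) = Q (Y b) /\ K (Y b) < K (Y a)))))).
Proof.
move=> [dxa dya _ _] [dxb dyb _ _]; rewrite /Blt (M_ltE dxa dxb) (M_eqE dxa dxb) (M_ltE dya dyb).
tauto.
Qed.

Lemma M_yx c : Bdom A c -> Q (Y c) < Q (X c) \/ (Q (Y c) = Q (X c) /\ K (X c) < K (Y c)).
Proof. by move=> [dx dy l _]; apply/M_ltE. Qed.

Lemma M_qm c : Bdom A c -> Q (X c) < n'.+2.
Proof. move=> [dx _ _ _]; have [qm _ _ _] := HC; exact: qm. Qed.

Definition blk1M c : 'I_n'.+1 := inord (minn (Q (X c)) n').
Definition blk2M (i q k j : nat) : nat :=
  if q == n'.+1 then 0 else (i == n') + k * q.+1 + (q - j).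
Definition blk2Mc (i : nat) c := blk2M i (Q (X c)) (K (X c)) (Q (Y c)).

Lemma blk1ME c (i : 'I_n'.+1) : Bdom A c -> (blk1M c = i <-> minn (Q (X c)) n' = i).
Proof.
move=> Bc; have := M_qm Bc => lt.
rewrite /blk1M; split => [<-|E]; first by rewrite inordK //; lia.
by apply: val_inj; rewrite /= inordK //; lia.
Qed.

Lemma MBsto : sto (Bdom A) (Blt A).
Proof. exact: B0_sto (coord_sto HC). Qed.

Lemma M_code_bound R0 N1 : exists N, forall b, Bdom A b -> K (X b) <= R0 ->
  (K (Y b) <= R0 \/ Y b < N1) -> b < N.
Proof.
have [N HN] := coord_bounded HC R0.
exists (cpair (maxn N N1) (maxn N N1)).+1 => b [dx dy _ _] h1 h2.
rewrite (cpair_unpairE b) ltnS; apply: cpair_mono.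
  have := HN _ dx h1; lia.
case: h2 => h2; [have := HN _ dy h2 | idtac]; lia.
Qed.

Lemma M_sub (i : 'I_n'.+1) K' :
  iso_to (LStruct (fun a => (Bdom A a /\ blk1M a = i) /\ blk2Mc i a = K') (fun a b => Blt A b a)) nat_lt.
Proof.
apply: omega_crit.
- exact: (sto_flip (sto_sub MBsto (fun a (h : (Bdom A a /\ blk1M a = i) /\ blk2Mc i a = K') => h.1.1))).
- move=> a [[Ba /(blk1ME _ Ba) ia] Ka].
  have qa := M_qm Ba. have ya := M_yx Ba.
  case: (eqVneq (Q (X a)) n'.+1) => [qa1|qa1].
  + have [Nw HNw] := coord_bounded HC (K (X a)).
    have [N HN] := M_code_bound (K (X a)) Nw.
    exists N => b [[Bb /(blk1ME _ Bb) ib] Kb] L.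
    have qb := M_qm Bb.
    have qb1 : Q (X b) = n'.+1.
      move: Ka Kb; rewrite /blk2Mc /blk2M qa1 eqxx => <-.
      case: eqP => // _; lia.
    move/(M_BltE Ba Bb): L => L.
    have kb : K (X b) <= K (X a) by lia.
    apply: HN => //. right.
    move: (Bb) => [dxb dyb _ [w [dw lw yw]]].
    have [qm _ _ _] := HC. have h2 := qm _ dw. have h1 := (M_ltE dxb dw).1 lw.
    have Kw : K w <= K (X a) by lia.
    have := HNw _ dw Kw. lia.
  + have [N HN] := M_code_bound (K (X a) + K (Y a)) 0.
    exists N => b [[Bb /(blk1ME _ Bb) ib] Kb] L.
    have qb := M_qm Bb. have yb := M_yx Bb.
    move/(M_BltE Ba Bb): L => L.
    move: Ka Kb; rewrite /blk2Mc /blk2M (negbTE qa1).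
    case: (eqVneq (Q (X b)) n'.+1) => [qb1|qb1] Ka Kb.
      exfalso. have iE : (i : nat) = n' by lia.
      move: Ka Kb; rewrite iE eqxx /=; lia.
    have Eq : Q (X b) = Q (X a) by lia.
    rewrite Eq in Kb.
    have E : K (X b) * (Q (X a)).+1 + (Q (X a) - Q (Y b)) = K (X a) * (Q (X a)).+1 + (Q (X a) - Q (Y a)) by lia.
    have [e1 e2] := divmod_eq (ltac:(lia) : Q (X a) - Q (Y b) < (Q (X a)).+1) (ltac:(lia) : Q (X a) - Q (Y a) < (Q (X a)).+1) E.
    apply: HN => //; lia.
- move=> N. have [qm _ _ _] := HC.
  case: (boolP (((i : nat) == n') && (K' == 0))) => [/andP [/eqP iE /eqP K0]|nz].
    have [dy qy ky] := XofP HC 0 (ltn0Sn n'.+1 : 0 < n'.+2).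
    have [w [dw qw kw nw]] := coord_unbounded HC 0 (Xof A Q K 0 0).+1 (ltnSn n'.+1).
    have [x [dx qx kx nx]] := coord_unbounded HC (K w).+1 N (ltnSn n'.+1).
    exists (cpair x (Xof A Q K 0 0)); split; last by apply: leq_trans nx (cpair_geL _ _).
    have B : Bdom A (cpair x (Xof A Q K 0 0)).
      rewrite /Bdom !unpair_cpair /=; split => //.
        apply/M_ltE => //; lia.
      exists w; split; [done | apply/M_ltE => //; lia | lia].
    split; first split => //.
      apply/(blk1ME _ B); rewrite unpair_cpair /= qx; lia.
    by rewrite /blk2Mc /blk2M !unpair_cpair /= qx eqxx K0.
  pose q := (i : nat). pose K'' := K' - (q == n').
  have qle : q <= n' by have := ltn_ord i; lia.
  have rq : K'' %% q.+1 < q.+1 by rewrite ltn_mod.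
  have [dx qx kx] := XofP HC (K'' %/ q.+1) (ltac:(lia) : q < n'.+2).
  have [y [dy qy ky ny]] := coord_unbounded HC (K'' %/ q.+1).+1 N (ltac:(lia) : q - K'' %% q.+1 < n'.+2).
  have [w [dw qw kw nw]] := coord_unbounded HC 0 y.+1 (ltac:(lia) : q.+1 < n'.+2).
  exists (cpair (Xof A Q K q (K'' %/ q.+1)) y); split; last by apply: leq_trans ny (cpair_geR _ _).
  have B : Bdom A (cpair (Xof A Q K q (K'' %/ q.+1)) y).
    rewrite /Bdom !unpair_cpair /=; split => //.
      apply/M_ltE => //; lia.
    exists w; split; [done | apply/M_ltE => //; lia | lia].
  split; first split => //.
    apply/(blk1ME _ B); rewrite unpair_cpair /= qx; lia.
  rewrite /blk2Mc /blk2M !unpair_cpair /= qx kx qy.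
  have -> : (q == n'.+1) = false by apply/eqP; lia.
  have := divn_eq K'' q.+1. move: nz. rewrite /K''. case: (q == n') => /=; lia.
Qed.

Lemma M_block (i : 'I_n'.+1) :
  iso_to (LStruct (fun a => Bdom A a /\ blk1M a = i) (fun a b => Blt A b a)) omega2_lt.
Proof.
apply: (@blocks nat nat nat_lt nat_lt _ _ (blk2Mc i)).
- exact: (sto_asym (sto_flip (sto_sub MBsto (fun a (h : Bdom A a /\ blk1M a = i) => h.1)))).
- rewrite /nat_lt => a b; lia.
- rewrite /nat_lt => a b; lia.
- move=> a b [Ba /(blk1ME _ Ba) ia] [Bb /(blk1ME _ Bb) ib] lt.
  apply/(M_BltE Bb Ba).
  have qa := M_qm Ba. have ya := M_yx Ba. have qb := M_qm Bb. have yb := M_yx Bb.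
  move: lt; rewrite /nat_lt /blk2Mc /blk2M.
  case: (eqVneq (Q (X a)) n'.+1) => [qa1|qa1]; case: (eqVneq (Q (X b)) n'.+1) => [qb1|qb1] //.
  + lia.
  + move=> lt. have Eq : Q (X b) = Q (X a) by lia.
    rewrite Eq in lt.
    have lt' : K (X a) * (Q (X a)).+1 + (Q (X a) - Q (Y a)) < K (X b) * (Q (X a)).+1 + (Q (X a) - Q (Y b)) by lia.
    have := divmod_lt (ltac:(lia) : Q (X a) - Q (Y a) < (Q (X a)).+1) (ltac:(lia) : Q (X a) - Q (Y b) < (Q (X a)).+1) lt'.
    lia.
- exact: M_sub.
Qed.

Lemma M_main : iso_to (B0 A) (lex (@ord_lt n'.+1) (fun p q => omega2_lt q p)).
Proof.
rewrite /B0; apply: (@blocks _ _ _ _ _ _ blk1M).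
- exact: sto_asym MBsto.
- rewrite /ord_lt => a b; lia.
- rewrite /ord_lt => a b ne. case: (ltngtP a b) => h; [by left|by right|].
  by case: ne; apply: val_inj.
- move=> a b Ba Bb; rewrite /ord_lt /blk1M.
  have h1 := M_qm Ba; have h2 := M_qm Bb.
  rewrite !inordK; try lia.
  move=> lt; apply/(M_BltE Ba Bb); lia.
- move=> i; apply: flip_iso; exact: M_block.
Qed.
End MCase.

Section Final.
Variable n' : nat.
Local Notation L1 := (omega_times n'.+2).
Local Notation L2 := (omegastar_times n'.+2).
Local Notation K1 := (omega2_times n'.+1).
Local Notation K2 := (omega2star_times n'.+1).

Lemma L1_least : exists t0, forall t, t <> t0 -> @ot_lt L1 t0 t.
Proof.
exists (ord0, 0) => -[i k] ne; rewrite /= /lex /ord_lt /nat_lt /=.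
case: (posnP i) => [i0|ip]; last by left.
right; split; first by apply: val_inj.
case: (posnP k) => // k0; case: ne; congr (_, _) => //; exact: val_inj.
Qed.

Lemma K1_least : exists t0, forall t, t <> t0 -> @ot_lt K1 t0 t.
Proof.
exists (ord0, (0, 0)) => -[i [a b]] ne; rewrite /= /lex /ord_lt /omega2_lt /lex /nat_lt /=.
case: (posnP i) => [i0|ip]; last by left.
right; split; first by apply: val_inj.
case: (posnP a) => [a0|ap]; last by left.
right; split => //; case: (posnP b) => // b0; case: ne; subst; congr (_, (_, _)) => //; exact: val_inj.
Qed.

Lemma L2_noleast : forall t, exists t', @ot_lt L2 t' t.
Proof. by move=> [i k]; exists (i, k.+1); rewrite /= /lex /nat_lt /=; right. Qed.

Lemma K2_noleast : forall t, exists t', @ot_lt K2 t' t.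
Proof.
by move=> [i [a b]]; exists (i, (a.+1, b)); rewrite /= /lex /omega2_lt /lex /nat_lt /=; right; split => //; left.
Qed.

Lemma L1_asym s t : @ot_lt L1 s t -> ~ @ot_lt L1 t s.
Proof.
case: s t => [i k] [j l]; rewrite /= /lex /ord_lt /nat_lt /=.
case=> [h|[/(congr1 (@nat_of_ord _)) e h]] [h'|[/(congr1 (@nat_of_ord _)) e' h']]; lia.
Qed.

Lemma K1_asym s t : @ot_lt K1 s t -> ~ @ot_lt K1 t s.
Proof.
case: s t => [i [a b]] [j [c d]]; rewrite /= /lex /omega2_lt /lex /ord_lt /nat_lt /=.
case=> [h|[/(congr1 (@nat_of_ord _)) e h]] [h'|[/(congr1 (@nat_of_ord _)) e' h']]; lia.
Qed.

Lemma sto_of_K0 A : cls2 L1 L2 A -> sto (sdom A) (slt A).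
Proof.
case=> H.
- have [Q [K HC]] := @coord_of A n'.+2 true H; exact: coord_sto HC.
- have [Q [K HC]] := @coord_of A n'.+2 false H; exact: coord_sto HC.
Qed.

Lemma B0_L1 A : iso_to A (@ot_lt L1) -> iso_to (B0 A) (@ot_lt K1).
Proof. move=> H; have [Q [K HC]] := @coord_of A n'.+2 true H; exact: L_main HC. Qed.

Lemma B0_L2 A : iso_to A (@ot_lt L2) -> iso_to (B0 A) (@ot_lt K2).
Proof. move=> H; have [Q [K HC]] := @coord_of A n'.+2 false H; exact: M_main HC. Qed.

Lemma L12 A : iso_to A (@ot_lt L1) -> iso_to A (@ot_lt L2) -> False.
Proof. move=> h1 h2; exact: excl h1 h2 L1_least L2_noleast L1_asym. Qed.
Lemma K12 A : iso_to A (@ot_lt K1) -> iso_to A (@ot_lt K2) -> False.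
Proof. move=> h1 h2; exact: excl h1 h2 K1_least K2_noleast K1_asym. Qed.

Lemma final_thm : comp_embeds (cls2 L1 L2) (cls2 K1 K2).
Proof.
exists Gop; split.
- exact: Gop_ce.
- move=> A KA; exists (B0 A); split; last exact: diag_B0 (sto_of_K0 KA).
  by case: KA => H; [left; exact: B0_L1 | right; exact: B0_L2].
- move=> A A' B B' KA KA' HB HB'.
  have EB : forall phi, diag B phi <-> diag (B0 A) phi.
    move=> phi; rewrite -HB; exact: (diag_B0 (sto_of_K0 KA) phi).
  have EB' : forall phi, diag B' phi <-> diag (B0 A') phi.
    move=> phi; rewrite -HB'; exact: (diag_B0 (sto_of_K0 KA') phi).
  case: KA => H; case: KA' => H'.
  + split=> _; last exact: iso_to_iso (H) (H').
    exact: iso_to_iso (diag_iso_to EB (B0_L1 H)) (diag_iso_to EB' (B0_L1 H')).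
  + split=> I; exfalso.
      exact: L12 H (iso_trans_to I H').
    exact: K12 (diag_iso_to EB (B0_L1 H)) (iso_trans_to I (diag_iso_to EB' (B0_L2 H'))).
  + split=> I; exfalso.
      exact: L12 (iso_trans_to I H') H.
    exact: K12 (iso_trans_to I (diag_iso_to EB' (B0_L1 H'))) (diag_iso_to EB (B0_L2 H)).
  + split=> _; last exact: iso_to_iso (H) (H').
    exact: iso_to_iso (diag_iso_to EB (B0_L2 H)) (diag_iso_to EB' (B0_L2 H')).
Qed.
End Final.

Theorem corollary3p3 (n : nat) : (1 <= n)%N ->
  comp_embeds (cls2 (omega_times n.+1) (omegastar_times n.+1))
              (cls2 (omega2_times n) (omega2star_times n)).
Proof.
case: n => [//|n'] _. exact: final_thm.
Qed.
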